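(* Let $d > 4$ be an integer and let $K$ be the field of fractions of a complete discrete valuation ring $\mathcal{O}$. In the coefficient-choosing game of degree $d$ over $K$, whichever player makes the last move has a winning strategy.
   Context: The coefficient-choosing game of degree $d$ over $K$: Nora and Wanda alternately choose coefficients of $f(x) = a_d x^d + \cdots + a_0$; on each move the current player picks a not-yet-chosen coefficient and assigns it a value in $K$, subject to $a_d \neq 0$, $a_0 \neq 0$. After all $d+1$ coefficients are chosen, Wanda wins if $f$ has a root in $K$, and Nora wins otherwise. Who moves first is fixed in advance, which determines who makes the last move. *)

(* Defs.v *)
From HB Require Import structures.
From mathcomp Require Import all_boot all_order all_algebra.
Set Implicit Arguments. Unset Strict Implicit. Unset Printing Implicit Defensive.
Import Order.TTheory GRing.Theory Num.Theory.
Local Open Scope ring_scope.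

(* v : K -> int is a normalized discrete valuation on K^x (its value at 0 is
   irrelevant and never used).  The valuation ring is O = {x | x = 0 \/ 0 <= v x}
   and K = Frac(O). *)
Record discrete_valuation (K : fieldType) (v : K -> int) : Prop := {
  dv_mul : forall x y, x != 0 -> y != 0 -> v (x * y) = v x + v y;
  dv_add : forall x y, x != 0 -> y != 0 -> x + y != 0 ->
             Num.min (v x) (v y) <= v (x + y);
  dv_surj : forall n : int, exists2 x : K, x != 0 & v x = n }.

(* the v-adic "distance" between x and y is at most q^-N *)
Definition vclose (K : fieldType) (v : K -> int) (N : int) (x y : K) : Prop :=
  x = y \/ N <= v (x - y).

Definition vcauchy (K : fieldType) (v : K -> int) (u : nat -> K) : Prop :=
  forall N : int, exists M : nat, forall m n : nat,
    (M <= m)%N -> (M <= n)%N -> vclose v N (u m) (u n).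

Definition vconverges (K : fieldType) (v : K -> int) (u : nat -> K) (l : K) : Prop :=
  forall N : int, exists M : nat, forall n : nat, (M <= n)%N -> vclose v N (u n) l.

Definition in_vring (K : fieldType) (v : K -> int) (x : K) : Prop :=
  x = 0 \/ 0 <= v x.

Definition complete_dvr (K : fieldType) (v : K -> int) : Prop :=
  discrete_valuation v /\
  forall u : nat -> K, (forall n, in_vring v (u n)) -> vcauchy v u ->
    exists2 l : K, in_vring v l & vconverges v u l.

Inductive player := Nora | Wanda.

Definition other (p : player) : player :=
  match p with Nora => Wanda | Wanda => Nora end.

Definition same_player (p q : player) : bool :=
  match p, q with Nora, Nora | Wanda, Wanda => true | _, _ => false end.

Definition position (K : fieldType) (d : nat) := 'I_d.+1 -> option K.

Definition start_pos (K : fieldType) (d : nat) : position K d := fun _ => None.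

Definition legal_move (K : fieldType) (d : nat) (s : position K d)
    (i : 'I_d.+1) (c : K) : Prop :=
  s i = None /\ (((i : nat) == 0%N) || ((i : nat) == d) -> c != 0).

Definition play (K : fieldType) (d : nat) (s : position K d)
    (i : 'I_d.+1) (c : K) : position K d :=
  fun j => if j == i then Some c else s j.

Definition pos_poly (K : fieldType) (d : nat) (s : position K d) : {poly K} :=
  \sum_(i < d.+1) odflt 0 (s i) *: 'X^i.

Definition winner_of (K : fieldType) (d : nat) (s : position K d) (p : player) : Prop :=
  match p with
  | Wanda => exists x : K, root (pos_poly s) x
  | Nora => forall x : K, ~~ root (pos_poly s) x
  end.

Fixpoint wins (K : fieldType) (d : nat) (p mover : player) (n : nat)
    (s : position K d) : Prop :=
  match n with
  | 0 => winner_of s p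
  | n'.+1 =>
      if same_player mover p then
        exists i c, legal_move s i c /\ wins p (other mover) n' (play s i c)
      else
        forall i c, legal_move s i c -> wins p (other mover) n' (play s i c)
  end.

Definition has_winning_strategy (K : fieldType) (d : nat) (first p : player) : Prop :=
  wins p first d.+1 (@start_pos K d).

(* There are d+1 moves, numbered 0..d; move k is made by [first] iff k is even. *)
Definition last_mover (d : nat) (first : player) : player :=
  if odd d then other first else first.

(* Main.v *)
From HB Require Import structures.
From mathcomp Require Import all_boot all_order all_algebra.
From mathcomp Require Import zify ring lra.
Require Import Defs.
From Stdlib Require Import Classical.
Set Implicit Arguments. Unset Strict Implicit. Unset Printing Implicit Defensive.
Import Order.TTheory GRing.Theory Num.Theory.
Local Open Scope ring_scope.

Lemma vone (K : fieldType) (v : K -> int) : discrete_valuation v -> v 1 = 0.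
Proof. move=> hv; have := dv_mul hv (oner_neq0 K) (oner_neq0 K); rewrite mulr1; have e : forall z : int, z = z + z -> z = 0 by lia. exact: e. Qed.

Lemma vNone (K : fieldType) (v : K -> int) : discrete_valuation v -> v (-1) = 0.
Proof.
move=> hv; have h1 : (-1 : K) != 0 by rewrite oppr_eq0 oner_neq0.
have := dv_mul hv h1 h1; rewrite mulrNN mulr1 vone //; lia.
Qed.

Lemma vopp (K : fieldType) (v : K -> int) x : discrete_valuation v -> x != 0 -> v (- x) = v x.
Proof.
move=> hv hx; have h1 : (-1 : K) != 0 by rewrite oppr_eq0 oner_neq0.
by rewrite -mulN1r dv_mul // vNone // add0r.
Qed.

Lemma vexp (K : fieldType) (v : K -> int) x n : discrete_valuation v -> x != 0 ->
  v (x ^+ n) = (n%:Z) * v x.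
Proof.
move=> hv hx; elim: n => [|n IH]; first by rewrite expr0 vone // mul0r.
rewrite exprS dv_mul // ?expf_neq0 // IH; lia.
Qed.

Lemma sum_gt (K : fieldType) (v : K -> int) (I : finType) (P : pred I) (y : I -> K) V :
  discrete_valuation v ->
  (forall j, P j -> y j = 0 \/ (y j != 0 /\ V < v (y j))) ->
  (\sum_(j | P j) y j = 0 \/ (\sum_(j | P j) y j != 0 /\ V < v (\sum_(j | P j) y j))).
Proof.
move=> hv h; apply: (big_ind (fun z => z = 0 \/ (z != 0 /\ V < v z))); [by left | | by []].
move=> a b [->|[ha va]] [->|[hb vb]]; rewrite ?add0r ?addr0; try by [left|right].
have [ab0|ab0] := eqVneq (a + b) 0; first by left.
right; split => //; have := dv_add hv ha hb ab0.
have : V < Num.min (v a) (v b) by rewrite lt_min va vb.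
exact: lt_le_trans.
Qed.

Lemma no_strict_min (K : fieldType) (v : K -> int) (I : finType) (y : I -> K) j0 :
  discrete_valuation v -> \sum_j y j = 0 -> y j0 != 0 ->
  exists j, [/\ j != j0, y j != 0 & v (y j) <= v (y j0)].
Proof.
move=> hv hs hj0.
case: (boolP [exists j, [&& j != j0, y j != 0 & v (y j) <= v (y j0)]]).
  by case/existsP => j /and3P [a b c]; exists j.
move/existsPn => hn; exfalso.
have := @sum_gt K v I (fun j => j != j0) y (v (y j0)) hv.
have H : forall j, j != j0 -> y j = 0 \/ (y j != 0 /\ v (y j0) < v (y j)).
  move=> j hj; have := hn j; rewrite hj /=.
  case: (eqVneq (y j) 0) => [->|nz] /=; first by left.
  by rewrite -ltNge => ?; right.
move=> /(_ H); rewrite (bigD1 j0) //= in hs.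
have e : \sum_(j | j != j0) y j = - y j0 by apply/eqP; rewrite -addr_eq0 addrC hs.
rewrite e vopp // oppr_eq0 (negPf hj0) ltxx; case=> [/eqP|[]//].
by rewrite oppr_eq0 (negPf hj0).
Qed.

Lemma nz_mul_ne1 (p y : int) : (2 <= p) -> p * y <> 1.
Proof. move=> h; have [y0|y0] : y <= 0 \/ 1 <= y by lia. all: nia. Qed.
Lemma nz_mul_ne2 (p y : int) : (3 <= p) -> p * y <> 2.
Proof. move=> h; have [y0|y0] : y <= 0 \/ 1 <= y by lia. all: nia. Qed.

Lemma choose1 (q b X : int) : 2 <= q -> exists M, X < M /\ forall m, q * m <> b + M.
Proof.
move=> hq; set t := `|X| + `|b| + 1.
have ht : `|X| + `|b| + 1 <= t by [].
exists (q * t - b + 1); split.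
  have : t <= q * t by nia. have : X <= `|X| by apply: ler_norm.
  have : - b <= `|b| by rewrite -normrN ler_norm. lia.
move=> m hm; apply: (@nz_mul_ne1 q (m - t)) => //; lia.
Qed.

Lemma choose2 (p q a b X : int) : 2 <= p -> 2 <= q -> 3 <= q ->
  exists M, [/\ X < M, forall m, p * m <> a + M & forall m, q * m <> b + M].
Proof.
move=> hp hq hq3; set t := `|X| + `|a| + 2.
have ht : `|X| + `|a| + 2 <= t by [].
have : t <= p * t by nia. have : X <= `|X| by apply: ler_norm.
have : - a <= `|a| by rewrite -normrN ler_norm. move=> h1 h2 h3.
case: (classic (exists m, q * m = b + (p * t - a + 1))) => [[m1 hm1]|hn].
  exists (p * t - a - 1); split; first lia.
    move=> m hm; apply: (@nz_mul_ne1 p (t - m)) => //; lia.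
  move=> m hm; apply: (@nz_mul_ne2 q (m1 - m)) => //; lia.
exists (p * t - a + 1); split; first lia.
  move=> m hm; apply: (@nz_mul_ne1 p (m - t)) => //; lia.
by move=> m hm; apply: hn; exists m.
Qed.

Lemma core_k (d k i : nat) (w0 wd wi m M B : int) :
  (k <= d)%N -> (i <= d)%N -> i <> k -> 0 <= B -> (2 * d + 1)%:Z * B < M ->
  (i <> 0%N -> `|wi| <= B) -> (k <> 0%N -> `|w0| <= B) -> (k <> d -> `|wd| <= B) ->
  (i = 0%N -> wi = w0) -> (i = d -> wi = wd) ->
  (k <> 0%N -> forall m', k%:Z * m' <> w0 + M) ->
  (k <> d -> forall m', (d%:Z - k%:Z) * m' <> wd + M) ->
  wi + i%:Z * m = - M + k%:Z * m ->
  (k <> 0%N -> wi + i%:Z * m <= w0) ->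
  (k <> d -> wi + i%:Z * m <= wd + d%:Z * m) -> False.
Proof.
move=> kd id ik B0 MB hi h0 hd e0 ed c1 c2 E l0 ld.
have [ie|i0] := eqVneq i 0%N; first subst i.
  have k0 : k <> 0%N by move=> k0; apply: ik; rewrite k0.
  apply: (c1 k0 m); rewrite -e0 //; lia.
have [iD|iD] := eqVneq i d.
  have kd' : k <> d by move=> k0; apply: ik; rewrite k0.
  apply: (c2 kd' (- m)); rewrite -ed //; lia.
have i0' : i <> 0%N by apply/eqP.
have iD' : i <> d by apply/eqP.
have := hi i0'.
have [ilk|kli] : (i < k)%N \/ (k < i)%N by lia.
  have k0 : k <> 0%N by lia.
  have := h0 k0; have := l0 k0.
  have [m0|m0] : m <= 0 \/ 0 < m by lia.
    move=> *; nia.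
  move=> *. have : m <= 2 * B by nia. nia.
have k0 : k <> d by lia.
have := hd k0; have := ld k0.
have [m0|m0] : 0 <= m \/ m < 0 by lia.
  move=> *; nia.
move=> *. have : - m <= 2 * B by nia. nia.
Qed.

Lemma core_nk (d k i j : nat) (wi wj m M B : int) :
  (k <= d)%N -> (i <= d)%N -> (j <= d)%N -> i <> j -> 0 <= B -> (2 * d + 1)%:Z * B < M ->
  `|wi| <= B -> `|wj| <= B ->
  wi + i%:Z * m = wj + j%:Z * m ->
  wi + i%:Z * m <= - M + k%:Z * m -> False.
Proof.
move=> kd id jd ij B0 MB hi hj E L.
have hm : `|m| <= 2 * B.
  have [m0|m0] : 0 <= m \/ m < 0 by lia.
  all: have [l|l] : (i < j)%N \/ (j < i)%N by lia.
  all: nia.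
Qed.

Lemma nora_final (K : fieldType) (v : K -> int) (d : nat) (a : 'I_d.+1 -> K)
    (k : 'I_d.+1) (M B : int) :
  discrete_valuation v ->
  a ord0 != 0 -> a ord_max != 0 -> a k != 0 -> v (a k) = - M -> 0 <= B ->
  (2 * d + 1)%:Z * B < M ->
  (forall j, j != k -> a j != 0 -> `|v (a j)| <= B) ->
  ((k : nat) <> 0%N -> forall m', (k : nat)%:Z * m' <> v (a ord0) + M) ->
  ((k : nat) <> d -> forall m', (d%:Z - (k : nat)%:Z) * m' <> v (a ord_max) + M) ->
  forall x, \sum_(j < d.+1) a j * x ^+ j != 0.
Proof.
move=> hv a0 ad ak vk B0 MB hB c1 c2 x.
have [->|hx] := eqVneq x 0.
  rewrite big_ord_recl expr0 mulr1 big1 ?addr0 // => j _.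
  by rewrite expr0n /= mulr0.
apply/negP => /eqP hs.
pose T (j : 'I_d.+1) : int := v (a j) + (j : nat)%:Z * v x.
have vy : forall j, a j != 0 -> v (a j * x ^+ j) = T j.
  by move=> j hj; rewrite dv_mul ?expf_neq0 // vexp.
case: (@arg_minP _ _ _ ord0 (fun j => a j != 0) T a0) => j0 Pj0 minj0.
have y0 : a j0 * x ^+ j0 != 0 by rewrite mulf_neq0 ?expf_neq0.
have [j1 [ne y1 le]] := no_strict_min hv hs y0.
have Pj1 : a j1 != 0 by move: y1; rewrite mulf_eq0 negb_or => /andP[].
rewrite !vy // in le.
have E : T j1 = T j0 by apply/eqP; rewrite eq_le le minj0.
have min1 : forall l, a l != 0 -> T j1 <= T l by move=> l hl; rewrite E minj0.
have kd : ((k : nat) <= d)%N by rewrite -ltnS.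
have idd : forall i : 'I_d.+1, ((i : nat) <= d)%N by move=> i; rewrite -ltnS.
have T0 : T ord0 = v (a ord0) by rewrite /T /= mul0r addr0.
have inj : forall i j : 'I_d.+1, (i : nat) = j -> i = j by move=> i j; apply: val_inj.
have ck : forall i, i != k -> T i = T k -> (forall l, a l != 0 -> T i <= T l) -> a i != 0 -> False.
  move=> i ik Ei mi ai.
  have ik' : (i : nat) <> k by move=> h; move/eqP: ik; apply; apply: inj.
  apply: (@core_k d k i (v (a ord0)) (v (a ord_max)) (v (a i)) (v x) M B) => //.
  - by move=> h; apply: hB.
  - move=> h; apply: hB => //; by apply/eqP => hh; apply: h; rewrite -hh.
  - move=> h; apply: hB => //; by apply/eqP => hh; apply: h; rewrite -hh.
  - by move=> h; have -> : i = ord0 by apply: inj.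
  - by move=> h; have -> : i = ord_max by apply: inj.
  - by move: Ei; rewrite /T vk.
  - by move=> _; rewrite -T0; apply: mi.
  - by move=> _; apply: (mi ord_max).
case: (boolP (j0 == k)) => [/eqP e0|n0].
  by apply: (ck j1 _ _ min1 Pj1); rewrite -e0.
case: (boolP (j1 == k)) => [/eqP e1|n1].
  by apply: (ck j0 n0 _ (fun l hl => minj0 l hl) Pj0); rewrite -e1 E.
have ij : (j0 : nat) <> j1 by move=> h; move/eqP: ne; apply; apply: inj.
apply: (@core_nk d k j0 j1 (v (a j0)) (v (a j1)) (v x) M B) => //.
- by apply: hB.
- by apply: hB.
- by have := minj0 k ak; rewrite /T vk.
Qed.

Lemma pos_poly_horner (K : fieldType) (d : nat) (s : position K d) x :
  (pos_poly s).[x] = \sum_(i < d.+1) odflt 0 (s i) * x ^+ i.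
Proof. by rewrite /pos_poly horner_sum; apply: eq_bigr => i _; rewrite hornerZ hornerXn. Qed.

Lemma pos_poly_coef (K : fieldType) (d : nat) (s : position K d) (j : 'I_d.+1) :
  (pos_poly s)`_j = odflt 0 (s j).
Proof.
rewrite /pos_poly coef_sum (bigD1 j) //= coefZ coefXn eqxx mulr1 big1 ?addr0 //.
move=> i ij; rewrite coefZ coefXn.
suff -> : ((j : nat) == i) = false by rewrite mulr0.
by apply/negP => /eqP h; move/eqP: ij; apply; apply: val_inj.
Qed.

Lemma play_eq (K : fieldType) (d : nat) (s : position K d) i c : play s i c i = Some c.
Proof. by rewrite /play eqxx. Qed.

Lemma play_ne (K : fieldType) (d : nat) (s : position K d) i c j :
  j != i -> play s i c j = s j.
Proof. by move=> h; rewrite /play (negPf h). Qed.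

Lemma horner_play (K : fieldType) (d : nat) (s : position K d) i c x :
  s i = None -> (pos_poly (play s i c)).[x] = c * x ^+ i + (pos_poly s).[x].
Proof.
move=> hs; rewrite !pos_poly_horner (bigD1 i) //= [in RHS](bigD1 i) //= play_eq hs /=.
rewrite mul0r add0r; congr (_ + _); apply: eq_bigr => j ji; by rewrite play_ne.
Qed.

Lemma nonroot (K : fieldType) (v : K -> int) (p : {poly K}) :
  discrete_valuation v -> p != 0 -> exists x, x != 0 /\ ~~ root p x.
Proof.
move=> hv p0; have [pi pi0 vpi] := dv_surj hv 1.
pose f (n : nat) := pi ^+ n.+1.
have finj : injective f.
  move=> a b /(congr1 v); rewrite /f !vexp // vpi !mulr1 => /eqP.
  by rewrite eqz_nat eqSS => /eqP.
pose rs := map f (iota 0 (size p)).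
have : ~~ all (root p) rs.
  apply/negP => hall.
  have hu : uniq rs by rewrite /rs map_inj_uniq ?iota_uniq.
  have := max_poly_roots p0 hall hu.
  by rewrite /rs size_map size_iota ltnn.
case/allPn => x /mapP [n _ ->] hn; exists (f n); split => //.
by rewrite /f expf_neq0.
Qed.

Definition nones (K : fieldType) (d : nat) (s : position K d) : nat :=
  #|[pred i | s i == None]|.

Definition valid (K : fieldType) (d : nat) (s : position K d) : Prop :=
  forall i c, s i = Some c -> ((i : nat) == 0%N) || ((i : nat) == d) -> c != 0.

Lemma nones_play (K : fieldType) (d : nat) (s : position K d) i c :
  s i = None -> nones (play s i c) = (nones s).-1.
Proof.
move=> hs; rewrite /nones [in RHS](cardD1 i) inE hs eqxx /=.
apply: eq_card => j; rewrite !inE /play; case: (eqVneq j i) => //= ->.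
Qed.

Lemma valid_play (K : fieldType) (d : nat) (s : position K d) i c :
  valid s -> legal_move s i c -> valid (play s i c).
Proof.
move=> hv [hs hc] j c'; rewrite /play; case: (eqVneq j i) => [->|ji] //.
  by case=> <-.
exact: hv.
Qed.

Lemma filled (K : fieldType) (d : nat) (s : position K d) k j :
  nones s = 1%N -> s k = None -> j != k -> exists a, s j = Some a.
Proof.
move=> hn hk jk; move: hn; rewrite /nones (cardD1 k) inE hk eqxx /= add1n => -[].
move/card0_eq => /(_ j); rewrite !inE jk /=.
by case: (s j) => [a|] // _; exists a.
Qed.

Lemma exists_none (K : fieldType) (d : nat) (s : position K d) n :
  nones s = n.+1 -> exists i, s i = None.
Proof.
move=> hn; have : (0 < nones s)%N by rewrite hn.
by case/card_gt0P => i; rewrite inE => /eqP; exists i.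
Qed.

Lemma wanda_last (K : fieldType) (v : K -> int) (d : nat) (s : position K d) k :
  discrete_valuation v -> (0 < d)%N -> nones s = 1%N -> valid s -> s k = None ->
  exists c, legal_move s k c /\ exists x, root (pos_poly (play s k c)) x.
Proof.
move=> hv d0 hn hval hk.
have fil : forall j, j != k -> exists a, (s j = Some a) /\ (((j : nat) == 0%N) || ((j : nat) == d) -> a != 0).
  move=> j jk; have [a ha] := filled hn hk jk; exists a; split => //; exact: hval.
case: (boolP ((k : nat) == 0%N)) => [/eqP k0|k0].
  have mk : (ord_max : 'I_d.+1) != k by apply/eqP => h; move: k0; rewrite -h /=; lia.
  have [a [ha ha0]] := fil _ mk.
  have p0 : pos_poly s != 0.
    apply/eqP => h; have := pos_poly_coef s ord_max; rewrite h coef0 ha /= => e.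
    have : a != 0 by apply: ha0; rewrite /= eqxx orbT.
    by rewrite -e eqxx.
  have [x [x0 hx]] := nonroot hv p0.
  exists (- (pos_poly s).[x]); split.
    split => // _; by rewrite oppr_eq0.
  by exists x; rewrite /root horner_play // k0 expr0 mulr1 addNr.
case: (boolP ((k : nat) == d)) => [/eqP kd|kd].
  have mk : (ord0 : 'I_d.+1) != k by apply/eqP => h; move: k0; rewrite -h.
  have [a [ha ha0]] := fil _ mk.
  have p0 : pos_poly s != 0.
    apply/eqP => h; have := pos_poly_coef s ord0; rewrite h coef0 ha /= => e.
    have : a != 0 by apply: ha0.
    by rewrite -e eqxx.
  have [x [x0 hx]] := nonroot hv p0.
  have xd : x ^+ k != 0 by rewrite expf_neq0.
  exists (- (pos_poly s).[x] / x ^+ k); split.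
    split => // _; by rewrite mulf_neq0 ?invr_eq0 // oppr_eq0.
  by exists x; rewrite /root horner_play // divfK // addNr.
exists (- (pos_poly s).[1]); split.
  by split => //; rewrite (negPf k0) (negPf kd).
by exists 1; rewrite /root horner_play // expr1n mulr1 addNr.
Qed.

Lemma wanda_wins (K : fieldType) (v : K -> int) (d : nat) :
  discrete_valuation v -> (0 < d)%N -> forall n (s : position K d),
  nones s = n.+1 -> valid s -> wins Wanda (if odd n then Nora else Wanda) n.+1 s.
Proof.
move=> hv d0; elim=> [|n IH] s hn hval.
  have [k hk] := exists_none hn.
  have [c [hc [x hx]]] := wanda_last hv d0 hn hval hk.
  by exists k, c; split => //; exists x.
have [k hk] := exists_none hn.
have step : forall i c, legal_move s i c ->
    wins Wanda (if odd n then Nora else Wanda) n.+1 (play s i c).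
  move=> i c hl; apply: IH; last exact: valid_play.
  by rewrite nones_play ?hn //; case: hl.
rewrite /=; case: (odd n) step => step /=.
  have hl : legal_move s k 1 by split => // _; rewrite oner_neq0.
  by exists k, 1; split => //; apply: step.
exact: step.
Qed.

Lemma nora_last (K : fieldType) (v : K -> int) (d : nat) (s : position K d) k :
  discrete_valuation v -> (4 < d)%N -> nones s = 1%N -> valid s -> s k = None ->
  (k : nat) <> 1%N -> (k : nat) <> d.-1 ->
  exists c, legal_move s k c /\ forall x, ~~ root (pos_poly (play s k c)) x.
Proof.
move=> hv d4 hn hval hk k1 kd1.
set B := \sum_(j < d.+1) `|v (odflt 0 (s j))|.
have B0 : 0 <= B by apply: sumr_ge0 => j _; exact: normr_ge0.
have hB : forall j, `|v (odflt 0 (s j))| <= B.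
  move=> j; rewrite /B (bigD1 j) //= lerDl sumr_ge0 // => i _; exact: normr_ge0.
set w0 := v (odflt 0 (s ord0)); set wd := v (odflt 0 (s ord_max)).
have kd : ((k : nat) <= d)%N by rewrite -ltnS.
have [M [MB c1 c2]] : exists M, [/\ (2 * d + 1)%:Z * B < M,
    ((k : nat) <> 0%N -> forall m', (k : nat)%:Z * m' <> w0 + M) &
    ((k : nat) <> d -> forall m', (d%:Z - (k : nat)%:Z) * m' <> wd + M)].
  case: (eqVneq (k : nat) 0%N) => [k0|k0].
    have [|M [h1 h2]] := @choose1 d%:Z wd ((2 * d + 1)%:Z * B); first lia.
    by exists M; split => // _ m'; rewrite k0 subr0; apply: h2.
  case: (eqVneq (k : nat) d) => [kD|kD].
    have [|M [h1 h2]] := @choose1 d%:Z w0 ((2 * d + 1)%:Z * B); first lia.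
    by exists M; split => // _ m'; rewrite kD; apply: h2.
  have [q3|q3] : (3 <= d - k)%N \/ (3 <= k)%N by lia.
    have [|||M [h1 h2 h3]] := @choose2 (k : nat)%:Z (d%:Z - (k : nat)%:Z) w0 wd
                               ((2 * d + 1)%:Z * B); try lia.
    by exists M; split => // _.
  have [|||M [h1 h2 h3]] := @choose2 (d%:Z - (k : nat)%:Z) (k : nat)%:Z wd w0
                               ((2 * d + 1)%:Z * B); try lia.
  by exists M; split => // _.
have [c c0 vc] := dv_surj hv (- M).
have aval : forall j, j != k -> ((j : nat) == 0%N) || ((j : nat) == d) ->
    odflt 0 (s j) != 0.
  move=> j jk hj; have [a ha] := filled hn hk jk; rewrite ha /=; exact: hval hj.
exists c; split; first by split => // _.
move=> x; rewrite /root pos_poly_horner.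
apply: (@nora_final K v d (fun j => odflt 0 (play s k c j)) k M B) => /=.
- exact: hv.
- case: (boolP ((ord0 : 'I_d.+1) == k)) => [/eqP <-|ne]; first by rewrite play_eq.
  by rewrite play_ne //; apply: aval.
- case: (boolP ((ord_max : 'I_d.+1) == k)) => [/eqP <-|ne]; first by rewrite play_eq.
  by rewrite play_ne //; apply: aval => //=; rewrite eqxx orbT.
- by rewrite play_eq.
- by rewrite play_eq.
- exact: B0.
- exact: MB.
- by move=> j jk _; rewrite play_ne.
- move=> h; rewrite play_ne; first exact: c1.
  by apply/eqP => e; apply: h; rewrite -e.
- move=> h; rewrite play_ne; first exact: c2.
  by apply/eqP => e; apply: h; rewrite -e.
Qed.

Definition bad (K : fieldType) (d : nat) (s : position K d) : nat :=
  ((s (inord 1) == None) + (s (inord d.-1) == None))%N.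

Lemma play_none_le (K : fieldType) (d : nat) (s : position K d) i c j :
  ((play s i c j == None) <= (s j == None))%N.
Proof. by rewrite /play; case: (j == i); case: (s j). Qed.

Lemma bad_play_le (K : fieldType) (d : nat) (s : position K d) i c :
  (bad (play s i c) <= bad s)%N.
Proof. by rewrite /bad leq_add // play_none_le. Qed.

Lemma bad_play_lt (K : fieldType) (d : nat) (s : position K d) i c :
  s i = None -> (i == inord 1) || (i == inord d.-1) -> (bad (play s i c) < bad s)%N.
Proof.
move=> hs /orP [] /eqP e; rewrite /bad -e play_eq hs /=.
  by have := play_none_le s i c (inord d.-1); case: (play s i c _ == None); case: (s _ == None).
by have := play_none_le s i c (inord 1); case: (play s i c _ == None); case: (s _ == None).
Qed.

Lemma nora_wins (K : fieldType) (v : K -> int) (d : nat) :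
  discrete_valuation v -> (4 < d)%N -> forall n (s : position K d),
  nones s = n.+1 -> valid s -> (bad s <= n./2)%N ->
  wins Nora (if odd n then Wanda else Nora) n.+1 s.
Proof.
move=> hv d4; elim=> [|n IH] s hn hval hb.
  have [k hk] := exists_none hn.
  have hb0 : bad s = 0%N by move: hb; rewrite /=; lia.
  have h1 : s (inord 1) != None.
    by apply/negP => /eqP e; move: hb0; rewrite /bad e eqxx.
  have h2 : s (inord d.-1) != None.
    by apply/negP => /eqP e; move: hb0; rewrite /bad e eqxx addn1.
  have k1 : (k : nat) <> 1%N.
    move=> e; have kk : k = inord 1.
      apply: val_inj => /=; rewrite inordK; [exact: e | lia].
    by move: h1; rewrite -kk hk.
  have kd1 : (k : nat) <> d.-1.
    move=> e; have kk : k = inord d.-1.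
      apply: val_inj => /=; rewrite inordK; [exact: e | lia].
    by move: h2; rewrite -kk hk.
  have [c [hc hr]] := nora_last hv d4 hn hval hk k1 kd1.
  by exists k, c.
have step : forall i c, legal_move s i c -> (bad (play s i c) <= n./2)%N ->
    wins Nora (if odd n then Wanda else Nora) n.+1 (play s i c).
  move=> i c hl hb'; apply: IH => //; last exact: valid_play.
  by rewrite nones_play ?hn //; case: hl.
rewrite /=; case: (boolP (odd n)) => o /=.
  have hb1 : (bad s <= (n./2).+1)%N by move: hb; lia.
  rewrite o /= in step.
  have one : (1 : K) != 0 by rewrite oner_neq0.
  case: (boolP (s (inord 1) == None)) => [/eqP e1|n1].
    exists (inord 1), 1; split; first by split => // _.
    apply: step; first by split => // _.
    have := bad_play_lt 1 e1 (introT orP (or_introl (eqxx _))); lia.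
  case: (boolP (s (inord d.-1) == None)) => [/eqP e2|n2].
    exists (inord d.-1), 1; split; first by split => // _.
    apply: step; first by split => // _.
    have := bad_play_lt 1 e2 (introT orP (or_intror (eqxx _))); lia.
  have b0 : bad s = 0%N by rewrite /bad (negPf n1) (negPf n2).
  have [k hk] := exists_none hn.
  exists k, 1; split; first by split => // _.
  apply: step; first by split => // _.
  by have := bad_play_le s k 1; rewrite b0; lia.
have hb1 : (bad s <= n./2)%N by move: hb; lia.
rewrite (negPf o) /= in step.
move=> i c hl; apply: step => //.
by have := bad_play_le s i c; lia.
Qed.

Lemma start_nones (K : fieldType) (d : nat) : nones (@start_pos K d) = d.+1.
Proof. by rewrite /nones -[RHS](card_ord d.+1); apply: eq_card => i; rewrite inE. Qed.

Lemma start_valid (K : fieldType) (d : nat) : valid (@start_pos K d).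
Proof. by []. Qed.

Lemma start_bad (K : fieldType) (d : nat) : bad (@start_pos K d) = 2%N.
Proof. by []. Qed.

Theorem theorem5 (K : fieldType) (v : K -> int) (d : nat) (first : player) :
  (4 < d)%N -> complete_dvr v ->
  has_winning_strategy K d first (last_mover d first).
Proof.
move=> d4 [hv _]; rewrite /has_winning_strategy /last_mover.
have hW := @wanda_wins K v d hv (ltnW (ltnW (ltnW (ltnW d4)))) d (@start_pos K d)
   (@start_nones K d) (@start_valid K d).
have hN := @nora_wins K v d hv d4 d (@start_pos K d)
   (@start_nones K d) (@start_valid K d).
rewrite start_bad in hN.
have h2 : (2 <= d./2)%N by lia.
case: (odd d) hW hN => hW hN; case: first => //=; by [exact: hW | exact: hN].
Qed.
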